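(* Let $G(s)\in\mathbb{C}(s)^{n\times n}$ be a strictly proper complex rational transfer function of McMillan degree $\delta$ with $G(s)=G(s)^t$. Then: (1) $G(s)$ has a controllable and observable complex symmetric realization, i.e. there exist $A\in\mathbb{C}^{\delta\times\delta}$ with $A=A^t$, $B\in\mathbb{C}^{\delta\times n}$ and $C=B^t$ such that $G(s)=C(sI_\delta-A)^{-1}B$ and $(A,B,C)$ is controllable and observable; equivalently $(A,B,C)=(A^t,C^t,B^t)$. (2) If $(A_i,B_i,C_i)$, $i=1,2$, are two controllable and observable complex symmetric realizations of $G(s)$ (so $A_i=A_i^t$, $C_i=B_i^t$), then there exists a unique $S\in O(\delta,\mathbb{C})$ such that $(A_2,B_2,C_2)=(SA_1S^{-1},SB_1,C_1S^{-1})$.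
   Context: $O(\delta,\mathbb{C})=\{S\in\mathbb{C}^{\delta\times\delta}: SS^t=I_\delta\}$ is the complex orthogonal group. A realization of $G$ is a triple $(A,B,C)$ with $G(s)=C(sI-A)^{-1}B$; the McMillan degree is the state dimension of a controllable and observable (minimal) realization. *)

(* Defs.v *)
(* The field of complex numbers is modelled by an arbitrary
   numClosedFieldType C (algebraically closed, characteristic 0, with conjugation);
   the complex numbers are an instance. *)
From HB Require Import structures.
From mathcomp Require Import all_boot all_order all_algebra.
Set Implicit Arguments. Unset Strict Implicit. Unset Printing Implicit Defensive.
Import Order.TTheory GRing.Theory Num.Theory.
Local Open Scope ring_scope.

Notation ratf C := {fraction {poly C}}.

Definition polyF (C : numClosedFieldType) (p : {poly C}) : ratf C :=
  FracField.tofrac p.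

Definition sIminus (C : numClosedFieldType) (d : nat) (A : 'M[C]_d) : 'M[ratf C]_d :=
  \matrix_(i, j) polyF ('X *+ (i == j) - (A i j)%:P).

Definition transfer (C : numClosedFieldType) (d m p : nat)
  (A : 'M[C]_d) (B : 'M[C]_(d, m)) (Cm : 'M[C]_(p, d)) : 'M[ratf C]_(p, m) :=
  map_mx (fun c => polyF c%:P) Cm *m invmx (sIminus A) *m map_mx (fun c => polyF c%:P) B.

Definition is_realization (C : numClosedFieldType) (d m p : nat)
  (G : 'M[ratf C]_(p, m)) (A : 'M[C]_d) (B : 'M[C]_(d, m)) (Cm : 'M[C]_(p, d)) : Prop :=
  G = transfer A B Cm.

(* Kalman rank condition: the columns of B, AB, ..., A^(d-1)B span C^d
   (columns of A^i B are the rows of (A^i B)^T). *)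
Definition controllable (C : numClosedFieldType) (d m : nat)
  (A : 'M[C]_d) (B : 'M[C]_(d, m)) : bool :=
  row_full (\sum_(i < d) <<(A ^+ i *m B)^T>>)%MS.

Definition observable (C : numClosedFieldType) (d p : nat)
  (A : 'M[C]_d) (Cm : 'M[C]_(p, d)) : bool :=
  row_full (\sum_(i < d) <<Cm *m A ^+ i>>)%MS.

Definition minimal_realization (C : numClosedFieldType) (d m p : nat)
  (G : 'M[ratf C]_(p, m)) (A : 'M[C]_d) (B : 'M[C]_(d, m)) (Cm : 'M[C]_(p, d)) : Prop :=
  [/\ is_realization G A B Cm, controllable A B & observable A Cm].

Definition mcmillan_degree (C : numClosedFieldType) (m p : nat)
  (G : 'M[ratf C]_(p, m)) (d : nat) : Prop :=
  exists (A : 'M[C]_d) (B : 'M[C]_(d, m)) (Cm : 'M[C]_(p, d)),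
    minimal_realization G A B Cm.

Definition strictly_proper_ratf (C : numClosedFieldType) (f : ratf C) : Prop :=
  exists (p q : {poly C}), [/\ q != 0, (size p < size q)%N & f = polyF p / polyF q].

Definition strictly_proper (C : numClosedFieldType) (m p : nat)
  (G : 'M[ratf C]_(p, m)) : Prop :=
  forall i j, strictly_proper_ratf (G i j).

Definition orthogonal_mx (C : numClosedFieldType) (d : nat) (S : 'M[C]_d) : Prop :=
  S *m S^T = 1%:M.

(* Main.v *)
Require Import Defs.
From HB Require Import structures.
From mathcomp Require Import all_boot all_order all_algebra.
From mathcomp Require Import zify.
Set Implicit Arguments. Unset Strict Implicit. Unset Printing Implicit Defensive.
Import Order.TTheory GRing.Theory Num.Theory.
Local Open Scope ring_scope.

Section Markov.
Variable C : numClosedFieldType.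
Notation tf := (@FracField.tofrac {poly C}).
Notation phi := (fun c : C => polyF c%:P).

Lemma phiE m n (X : 'M[C]_(m,n)) : map_mx phi X = map_mx tf (map_mx polyC X).
Proof. by apply/matrixP=> i j; rewrite !mxE. Qed.

Lemma sIminusE d (A : 'M[C]_d) : sIminus A = map_mx tf (char_poly_mx A).
Proof. by apply/matrixP=> i j; rewrite !mxE. Qed.

Lemma sIminusE2 d (A : 'M[C]_d) : sIminus A = polyF 'X *: 1%:M - map_mx phi A.
Proof.
apply/matrixP=> i j; rewrite !mxE /polyF rmorphB /=; congr (_ - _).
by rewrite rmorphMn mulr_natr.
Qed.

Lemma sIminus_unit d (A : 'M[C]_d) : sIminus A \in unitmx.
Proof.
rewrite sIminusE unitmxE det_map_mx unitfE tofrac_eq0 -/(char_poly A).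
by rewrite monic_neq0 // char_poly_monic.
Qed.

Lemma invE d (A : 'M[C]_d) : invmx (sIminus A) =
  (tf (char_poly A))^-1 *: map_mx tf (\adj (char_poly_mx A)).
Proof.
have u := sIminus_unit A.
by rewrite /invmx u sIminusE det_map_mx map_mx_adj.
Qed.

Lemma size_det_le2 k (M : 'M[{poly C}]_k) :
  (forall i j, size (M i j) <= 2)%N -> (size (\det M) <= k.+1)%N.
Proof.
move=> H; rewrite /determinant.
apply: leq_trans (size_sum _ _ _) _; apply/bigmax_leqP=> s _.
rewrite size_Msign.
apply: (@leq_trans (\sum_(i<k) 1)%N.+1); last by rewrite sum1_card card_ord.

apply: (big_ind2 (fun (p : {poly C}) (m : nat) => size p <= m.+1)%N) => [| p mp q mq IHp IHq | j _].
- by rewrite size_poly1.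
- apply: leq_trans (size_polyMleq _ _) _.
  by rewrite -subn1 -addnS leq_subLR addnA leq_add.
- exact: H.
Qed.

Lemma size_adj d (A : 'M[C]_d) i j : (size (\adj (char_poly_mx A) i j) <= d)%N.
Proof.
rewrite mxE /cofactor size_Msign.
have hd : (d.-1.+1 = d)%N by case: d A i j => // A0 [].

rewrite -[X in (_ <= X)%N]hd; apply: size_det_le2 => k l.
rewrite !mxE; case: (_ == _); rewrite ?mulr1n ?mulr0n.
  apply: leq_trans (size_add _ _) _; rewrite size_polyX size_polyN size_polyC geq_max leqnn /=.
  by case: (_ != 0).
by rewrite sub0r size_polyN size_polyC; case: (_ != 0).
Qed.

Lemma phiM a b c (X : 'M[C]_(a,b)) (Y : 'M[C]_(b,c)) :
  map_mx phi (X *m Y) = map_mx phi X *m map_mx phi Y.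
Proof. by rewrite !phiE !map_mxM. Qed.

Definition Emx d m p (A : 'M[C]_d) (B : 'M[C]_(d,m)) (Cm : 'M[C]_(p,d)) k :=
  map_mx phi (Cm *m A ^+ k) *m invmx (sIminus A) *m map_mx phi B.

Lemma E0 d m p (A : 'M[C]_d) (B : 'M[C]_(d,m)) (Cm : 'M[C]_(p,d)) :
  Emx A B Cm 0 = transfer A B Cm.
Proof. by rewrite /Emx expr0 mulmx1. Qed.

Lemma E_step d m p (A : 'M[C]_d) (B : 'M[C]_(d,m)) (Cm : 'M[C]_(p,d)) k :
  polyF 'X *: Emx A B Cm k = map_mx phi (Cm *m A ^+ k *m B) + Emx A B Cm k.+1.
Proof.
set R := invmx (sIminus A).
have hR : polyF 'X *: R = 1%:M + map_mx phi A *m R.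
  have := mulmxV (sIminus_unit A); rewrite -/R sIminusE2 mulmxBl -scalemxAl mul1mx.
  by move=> <-; rewrite subrK.
rewrite /Emx -/R scalemxAl scalemxAr hR mulmxDr mulmxDl mulmx1 phiM.
by rewrite !mulmxA -!phiM exprSr -mulmxE mulmxA.
Qed.

Lemma size_lmul a b c (X : 'M[C]_(a,b)) (M : 'M[{poly C}]_(b,c)) k :
  (forall i j, size (M i j) <= k)%N -> forall i j, (size ((map_mx polyC X *m M) i j) <= k)%N.
Proof.
move=> H i j; rewrite mxE; apply: leq_trans (size_sum _ _ _) _.
apply/bigmax_leqP=> l _; rewrite mxE mul_polyC.
exact: leq_trans (size_scale_leq _ _) (H _ _).
Qed.

Lemma size_rmul a b c (X : 'M[C]_(b,c)) (M : 'M[{poly C}]_(a,b)) k :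
  (forall i j, size (M i j) <= k)%N -> forall i j, (size ((M *m map_mx polyC X) i j) <= k)%N.
Proof.
move=> H i j; rewrite mxE; apply: leq_trans (size_sum _ _ _) _.
apply/bigmax_leqP=> l _; rewrite mxE mulrC mul_polyC.
exact: leq_trans (size_scale_leq _ _) (H _ _).
Qed.

Lemma E_form d m p (A : 'M[C]_d) (B : 'M[C]_(d,m)) (Cm : 'M[C]_(p,d)) k i j :
  exists q : {poly C}, (size q <= d)%N /\ Emx A B Cm k i j = tf q / tf (char_poly A).
Proof.
set Q := map_mx polyC (Cm *m A ^+ k) *m \adj (char_poly_mx A) *m map_mx polyC B.
exists (Q i j); split.
  by apply: size_rmul => i' j'; apply: size_lmul => i'' j''; apply: size_adj.
have EQ : Emx A B Cm k = (tf (char_poly A))^-1 *: map_mx tf Q.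
  by rewrite /Emx invE !phiE -scalemxAr -scalemxAl /Q !map_mxM.
by rewrite EQ !mxE mulrC.
Qed.

Lemma cancel_lemma (c : C) (q1 q2 x1 x2 : {poly C}) :
  x1 != 0 -> x2 != 0 -> (size q1 < size x1)%N -> (size q2 < size x2)%N ->
  tf c%:P = tf q1 / tf x1 - tf q2 / tf x2 -> c = 0.
Proof.
move=> n1 n2 s1 s2 H.
have t1 : tf x1 != 0 by rewrite tofrac_eq0.
have t2 : tf x2 != 0 by rewrite tofrac_eq0.
have H2 : tf (c%:P * x1 * x2) = tf (q1 * x2 - q2 * x1).
  by rewrite tofracB !tofracM H !mulrBl (divfK t1) [_ / tf x2 * _ * _]mulrAC (divfK t2).
move/eqP: H2; rewrite tofrac_eq => /eqP H3.
apply/eqP; apply/negP => /negP cn0.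
have : size (c%:P * x1 * x2) = (size x1 + size x2).-1.
  by rewrite -mulrA size_Cmul // size_mul.
rewrite H3 => E.
have := size_add (q1 * x2) (- (q2 * x1)); rewrite size_polyN E.
have := size_polyMleq q1 x2; have := size_polyMleq q2 x1.
have : (0 < size x1)%N by rewrite size_poly_gt0.
have : (0 < size x2)%N by rewrite size_poly_gt0.
move=> p2 p1 h2 h1 h4.
have hm : (maxn (size (q1 * x2)%R) (size (q2 * x1)%R) <= maxn (size q1 + size x2).-1 (size q2 + size x1).-1)%N.
  by rewrite geq_max !leq_max h1 h2 orbT.
have := leq_trans h4 hm.
lia.
Qed.

Lemma aux_entry p m (M1 M2 : 'M[C]_(p,m)) (E1 E2 : 'M[ratf C]_(p,m)) i j :
  map_mx phi M1 + E1 = map_mx phi M2 + E2 -> tf ((M1 - M2) i j)%:P = E2 i j - E1 i j.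
Proof.
move/matrixP/(_ i j); rewrite !mxE /polyF => H.
rewrite polyCB tofracB.
have -> : tf (M1 i j)%:P = tf (M2 i j)%:P + E2 i j - E1 i j by rewrite -H addrK.
by rewrite addrAC (addrC (tf _)) addrK.
Qed.

Lemma step_lemma d1 d2 m p (A1 : 'M[C]_d1) (B1 : 'M[C]_(d1,m)) (C1 : 'M[C]_(p,d1))
  (A2 : 'M[C]_d2) (B2 : 'M[C]_(d2,m)) (C2 : 'M[C]_(p,d2)) k :
  Emx A1 B1 C1 k = Emx A2 B2 C2 k ->
  C1 *m A1 ^+ k *m B1 = C2 *m A2 ^+ k *m B2 /\ Emx A1 B1 C1 k.+1 = Emx A2 B2 C2 k.+1.
Proof.
move=> Ek.
have H : map_mx phi (C1 *m A1 ^+ k *m B1) + Emx A1 B1 C1 k.+1 =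
         map_mx phi (C2 *m A2 ^+ k *m B2) + Emx A2 B2 C2 k.+1.
  by rewrite -!E_step Ek.
have HM : C1 *m A1 ^+ k *m B1 = C2 *m A2 ^+ k *m B2.
  apply/matrixP=> i j; apply/eqP; rewrite -subr_eq0; apply/eqP.
  have [q1 [s1 e1]] := E_form A2 B2 C2 k.+1 i j.
  have [q2 [s2 e2]] := E_form A1 B1 C1 k.+1 i j.
  apply: (@cancel_lemma _ q1 q2 (char_poly A2) (char_poly A1)).
  - by rewrite monic_neq0 // char_poly_monic.
  - by rewrite monic_neq0 // char_poly_monic.
  - by rewrite size_char_poly.
  - by rewrite size_char_poly.
  rewrite -e1 -e2 -(aux_entry i j H).
  by rewrite !mxE.
split=> //.
by move: H; rewrite HM => /addrI.
Qed.

Lemma markov d1 d2 m p (A1 : 'M[C]_d1) (B1 : 'M[C]_(d1,m)) (C1 : 'M[C]_(p,d1))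
  (A2 : 'M[C]_d2) (B2 : 'M[C]_(d2,m)) (C2 : 'M[C]_(p,d2)) :
  transfer A1 B1 C1 = transfer A2 B2 C2 ->
  forall k, C1 *m A1 ^+ k *m B1 = C2 *m A2 ^+ k *m B2.
Proof.
rewrite -!E0 => H.
have Ek : forall k, Emx A1 B1 C1 k = Emx A2 B2 C2 k.
  by elim=> // k IH; case: (step_lemma IH).
by move=> k; case: (step_lemma (Ek k)).
Qed.
End Markov.

Section Sim.
Variable C : numClosedFieldType.

Definition Kmx d n (A : 'M[C]_d) (B : 'M[C]_(d,n)) := \mxrow_(k < d) (A ^+ k *m B).
Definition Omx d p (A : 'M[C]_d) (Cm : 'M[C]_(p,d)) := \mxcol_(k < d) (Cm *m A ^+ k).

Lemma ctrl_rinv d n (A : 'M[C]_d) (B : 'M[C]_(d,n)) :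
  controllable A B -> exists R, Kmx A B *m R = 1%:M.
Proof.
rewrite /controllable /row_full.
have e := (eqmx_col (fun i : 'I_d => (A ^+ i *m B)^T)).1.
rewrite -e -tr_mxrow -/(Kmx A B) -/(row_full _) => /row_fullP [X hX].
by exists X^T; rewrite -[Kmx A B]trmxK -trmx_mul hX trmx1.
Qed.

Lemma obs_linv d p (A : 'M[C]_d) (Cm : 'M[C]_(p,d)) :
  observable A Cm -> exists L, L *m Omx A Cm = 1%:M.
Proof.
rewrite /observable /row_full.
have e := (eqmx_col (fun i : 'I_d => Cm *m A ^+ i)).1.
by rewrite -e -/(Omx A Cm) -/(row_full _) => /row_fullP.
Qed.

Lemma comm_pow d d' (S : 'M[C]_(d', d)) (A1 : 'M[C]_d) (A2 : 'M[C]_d') k :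
  S *m A1 = A2 *m S -> S *m A1 ^+ k = A2 ^+ k *m S.
Proof.
move=> h; elim: k => [|k IH]; first by rewrite !expr0 mulmx1 mul1mx.
by rewrite !exprS -!mulmxE mulmxA h -mulmxA IH mulmxA.
Qed.

Lemma sim_unique d n (A1 A2 : 'M[C]_d) (B1 B2 : 'M[C]_(d,n)) T T' :
  controllable A1 B1 -> T *m A1 = A2 *m T -> T *m B1 = B2 ->
  T' *m A1 = A2 *m T' -> T' *m B1 = B2 -> T = T'.
Proof.
move=> /ctrl_rinv [R hR] hA hB hA' hB'.
have pw : forall S, S *m A1 = A2 *m S -> S *m B1 = B2 -> S *m Kmx A1 B1 = Kmx A2 B2.
  move=> S h1 h2; rewrite /Kmx mul_mxrow; apply: eq_mxrow => k.
  by rewrite mulmxA (comm_pow _ h1) -mulmxA h2.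
by rewrite -[T]mulmx1 -hR mulmxA pw // -(pw T') // -mulmxA hR mulmx1.
Qed.

Lemma exprD_mx d (A : 'M[C]_d) i j : A ^+ i *m A ^+ j = A ^+ (i + j).
Proof. by rewrite exprD mulmxE. Qed.

Lemma exprSr_mx d (A : 'M[C]_d) i : A ^+ i *m A = A ^+ i.+1.
Proof. by rewrite exprSr mulmxE. Qed.

Lemma hankel d n p (A1 A2 : 'M[C]_d) (B1 B2 : 'M[C]_(d,n)) (C1 C2 : 'M[C]_(p,d)) :
  (forall k, C1 *m A1 ^+ k *m B1 = C2 *m A2 ^+ k *m B2) ->
  Omx A1 C1 *m Kmx A1 B1 = Omx A2 C2 *m Kmx A2 B2 /\
  Omx A1 C1 *m A1 *m Kmx A1 B1 = Omx A2 C2 *m A2 *m Kmx A2 B2.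
Proof.
move=> H; split.
  rewrite /Omx /Kmx !mul_mxcol_mxrow; apply: eq_mxblock => i j.
  by rewrite !mulmxA -!(mulmxA _ (_ ^+ i)) !exprD_mx H.
rewrite /Omx /Kmx [_ *m A1]mxcol_mul [_ *m A2]mxcol_mul !mul_mxcol_mxrow; apply: eq_mxblock => i j.
by rewrite !mulmxA -!(mulmxA _ (_ ^+ i)) !exprSr_mx -!(mulmxA _ (_ ^+ i.+1)) !exprD_mx H.
Qed.

Lemma first_blockK d n (T : 'M[C]_d) (A1 A2 : 'M[C]_d) (B1 B2 : 'M[C]_(d,n)) :
  T *m Kmx A1 B1 = Kmx A2 B2 -> T *m B1 = B2.
Proof.
case: d T A1 A2 B1 B2 => [|d] T A1 A2 B1 B2; first by rewrite !flatmx0.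
move/(congr1 (fun M => submxrow M ord0)).
by rewrite /Kmx mul_mxrow !mxrowK /= !expr0 !mul1mx.
Qed.

Lemma first_blockO d p (T : 'M[C]_d) (A1 A2 : 'M[C]_d) (C1 C2 : 'M[C]_(p,d)) :
  Omx A1 C1 = Omx A2 C2 *m T -> C1 = C2 *m T.
Proof.
case: d T A1 A2 C1 C2 => [|d] T A1 A2 C1 C2; first by rewrite !thinmx0.
move/(congr1 (fun M => submxcol M ord0)).
by rewrite /Omx mxcol_mul !mxcolK /= !expr0 !mulmx1.
Qed.

Lemma sim_exists d n p (A1 A2 : 'M[C]_d) (B1 B2 : 'M[C]_(d,n)) (C1 C2 : 'M[C]_(p,d)) :
  (forall k, C1 *m A1 ^+ k *m B1 = C2 *m A2 ^+ k *m B2) ->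
  controllable A1 B1 -> observable A1 C1 -> controllable A2 B2 -> observable A2 C2 ->
  exists T, [/\ T \in unitmx, T *m A1 = A2 *m T, T *m B1 = B2 & C1 = C2 *m T].
Proof.
move=> H c1 o1 c2 o2.
have [R1 hR1] := ctrl_rinv c1; have [R2 hR2] := ctrl_rinv c2.
have [L1 hL1] := obs_linv o1; have [L2 hL2] := obs_linv o2.
have [HK HA] := hankel H.
set K1 := Kmx A1 B1 in hR1 HK HA; set K2 := Kmx A2 B2 in hR2 HK HA.
set O1 := Omx A1 C1 in hL1 HK HA; set O2 := Omx A2 C2 in hL2 HK HA.
pose T := L2 *m O1; pose U := L1 *m O2.
have TK : T *m K1 = K2 by rewrite /T -mulmxA HK mulmxA hL2 mul1mx.
have UK : U *m K2 = K1 by rewrite /U -mulmxA -HK mulmxA hL1 mul1mx.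
have OT : O1 = O2 *m T.
  by rewrite -[O1]mulmx1 -hR1 mulmxA HK -TK mulmxA -(mulmxA _ K1) hR1 mulmx1.
have TU : T *m U = 1%:M.
  by rewrite -[T *m U]mulmx1 -hR2 mulmxA -[T *m U *m K2]mulmxA UK TK hR2.
have TA : T *m A1 = A2 *m T.
  rewrite -[T *m A1]mulmx1 -hR1 -[A2 *m T]mulmx1 -hR1 !mulmxA.
  congr (_ *m R1).
  have -> : T *m A1 *m K1 = L2 *m (O1 *m A1 *m K1) by rewrite /T !mulmxA.
  by rewrite HA !mulmxA hL2 mul1mx -TK /T !mulmxA.
exists T; split => //.
- by case: (mulmx1_unit TU).
- exact: (first_blockK TK).
- exact: (first_blockO OT).
Qed.

End Sim.
Section Fact.
Variable C : numClosedFieldType.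

Lemma bil_e d (T : 'M[C]_d) (i j : 'I_d) :
  ((delta_mx 0 i : 'rV_d) *m T *m (delta_mx 0 j : 'rV_d)^T) 0 0 = T i j.
Proof. by rewrite -rowE trmx_delta -colE !mxE. Qed.

Lemma addE00 (X Y : 'M[C]_1) : (X + Y) 0 0 = X 0 0 + Y 0 0.
Proof. by rewrite mxE. Qed.

Lemma quad_nonzero d (T : 'M[C]_d) : T^T = T -> T != 0 ->
  exists w : 'rV[C]_d, (w *m T *m w^T) 0 0 != 0.
Proof.
move=> sT nT.
have [[i j] /= hij | h] := pickP (fun p : 'I_d * 'I_d => T p.1 p.2 != 0); last first.
  case/eqP: nT; apply/matrixP => i j; rewrite mxE.
  by move: (h (i, j)) => /= /negbFE /eqP.
have [hii|hii] := eqVneq (T i i) 0; last by exists (delta_mx 0 i); rewrite bil_e.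
have [hjj|hjj] := eqVneq (T j j) 0; last by exists (delta_mx 0 j); rewrite bil_e.
exists (delta_mx 0 i + delta_mx 0 j).
rewrite linearD /= !mulmxDl !mulmxDr !addE00 !bil_e hii hjj add0r addr0.
have -> : T j i = T i j by rewrite -{1}sT mxE.
by rewrite -mulr2n mulrn_eq0 negb_or hij andbT.
Qed.

Lemma sym_fact_k d k : forall T : 'M[C]_d, T^T = T -> (\rank T <= k)%N ->
  exists R : 'M[C]_(k, d), T = R^T *m R.
Proof.
elim: k => [|k IH] T sT rT.
  exists 0; rewrite mulmx0; apply/eqP; rewrite -mxrank_eq0.
  by rewrite -leqn0.
have [->|nT] := eqVneq T 0; first by exists 0; rewrite mulmx0.
have [w hw] := quad_nonzero sT nT.
set a := (w *m T *m w^T) 0 0 in hw.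
set v := w *m T.
pose T' := T - a^-1 *: (v^T *m v).
have sT' : T'^T = T'.
  by rewrite /T' linearB linearZ /= trmx_mul trmxK sT.
have wv : w *m v^T = a%:M.
  by rewrite /v trmx_mul sT mulmxA [LHS]mx11_scalar.
have wT' : w *m T' = 0.
  rewrite /T' mulmxBr -scalemxAr mulmxA wv mul_scalar_mx scalerA mulVf //.
  by rewrite scale1r -/v subrr.
have sub : (T' <= T)%MS.
  have -> : T' = (1%:M - a^-1 *: (v^T *m w)) *m T.
    by rewrite mulmxBl mul1mx -scalemxAl -mulmxA.
  exact: submxMl.
have nsub : ~~ (T <= T')%MS.
  apply/negP => /submxP [X hX].
  have h0 : T' *m w^T = 0 by rewrite -[T']sT' -trmx_mul wT' trmx0.
  have hT : T *m w^T = 0 by rewrite hX -mulmxA h0 mulmx0. move: hw; rewrite /a -mulmxA hT mulmx0 mxE eqxx //.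
have : (T' < T)%MS by rewrite ltmxE sub nsub.
rewrite ltmxErank => /andP[_ lt].
have [R' hR'] := IH T' sT' (leq_trans lt rT).
have a0 : a != 0 by [].
set s := sqrtC a.
have s0 : s != 0 by rewrite sqrtC_eq0.
suff [R hR] : exists R : 'M[C]_(1 + k, d), T = R^T *m R by exists R.
exists (col_mx (s^-1 *: v) R').
rewrite tr_col_mx mul_row_col -hR' linearZ /= linearZ /= -scalemxAl scalerA.
rewrite -invfM -expr2 sqrtCK /T'.
by rewrite addrC subrK.
Qed.

Lemma sym_fact d (T : 'M[C]_d) : T^T = T -> exists R : 'M[C]_d, T = R^T *m R.
Proof. move=> sT; exact: (sym_fact_k sT (rank_leq_row T)). Qed.
End Fact.


Section Final.
Variable C : numClosedFieldType.
Notation phi := (fun c : C => polyF c%:P).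

Lemma trmx_exp d (A : 'M[C]_d) k : (A ^+ k)^T = A^T ^+ k.
Proof.
elim: k => [|k IH]; first by rewrite !expr0 trmx1.
have e1 : A ^+ k.+1 = A *m A ^+ k by rewrite exprS mulmxE.
have e2 : A^T ^+ k.+1 = A^T ^+ k *m A^T by rewrite exprSr mulmxE.
by rewrite e1 e2 trmx_mul IH.
Qed.

Lemma ctrl_tr d p (A : 'M[C]_d) (Cm : 'M[C]_(p,d)) :
  controllable A^T Cm^T = observable A Cm.
Proof.
rewrite /controllable /observable; congr (row_full _); apply: eq_bigr => i _.
by rewrite trmx_mul trmxK -trmx_exp trmxK.
Qed.

Lemma obs_tr d n (A : 'M[C]_d) (B : 'M[C]_(d,n)) :
  observable A^T B^T = controllable A B.
Proof.
rewrite /controllable /observable; congr (row_full _); apply: eq_bigr => i _.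
by rewrite trmx_mul trmx_exp.
Qed.

Lemma sIminus_tr d (A : 'M[C]_d) : sIminus A^T = (sIminus A)^T.
Proof. by apply/matrixP=> i j; rewrite !mxE eq_sym. Qed.

Lemma transfer_tr d n p (A : 'M[C]_d) (B : 'M[C]_(d,n)) (Cm : 'M[C]_(p,d)) :
  transfer A^T Cm^T B^T = (transfer A B Cm)^T.
Proof.
by rewrite /transfer sIminus_tr -trmx_inv !trmx_mul !map_trmx !mulmxA.
Qed.

Lemma inv_eq d (X Y : 'M[ratf C]_d) : X *m Y = 1%:M -> invmx X = Y.
Proof.
move=> XY; have [uX _] := mulmx1_unit XY.
by rewrite -[invmx X]mulmx1 -XY mulKmx.
Qed.

Lemma phi1 d : map_mx phi (1%:M : 'M[C]_d) = 1%:M.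
Proof. by rewrite phiE !map_mx1. Qed.

Lemma transfer_sim d n p (A : 'M[C]_d) (B : 'M[C]_(d,n)) (Cm : 'M[C]_(p,d)) R :
  R \in unitmx ->
  transfer (R *m A *m invmx R) (R *m B) (Cm *m invmx R) = transfer A B Cm.
Proof.
move=> uR; set Ri := invmx R.
have fRRi : map_mx phi R *m map_mx phi Ri = 1%:M by rewrite -phiM mulmxV // phi1.
have fRiR : map_mx phi Ri *m map_mx phi R = 1%:M by rewrite -phiM mulVmx // phi1.
have E : sIminus (R *m A *m Ri) = map_mx phi R *m sIminus A *m map_mx phi Ri.
  by rewrite !sIminusE2 mulmxBr mulmxBl -scalemxAr mulmx1 -scalemxAl fRRi -!phiM.
have I : invmx (sIminus (R *m A *m Ri)) =
         map_mx phi R *m invmx (sIminus A) *m map_mx phi Ri.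
  apply: inv_eq; rewrite E !mulmxA -(mulmxA _ (map_mx phi Ri) (map_mx phi R)) fRiR mulmx1.
  by rewrite -(mulmxA (map_mx phi R)) mulmxV ?sIminus_unit // mulmx1 fRRi.
rewrite /transfer I !phiM !mulmxA -(mulmxA _ (map_mx phi Ri) (map_mx phi R)) fRiR mulmx1.
by rewrite -(mulmxA _ (map_mx phi Ri) (map_mx phi R)) fRiR mulmx1.
Qed.

Lemma rf_mul d m e (X : 'I_d -> 'M[C]_(m, e)) (M : 'M[C]_e) : M \in unitmx ->
  row_full (\sum_(i < d) <<X i *m M>>)%MS = row_full (\sum_(i < d) <<X i>>)%MS.
Proof.
move=> uM; rewrite /row_full -(eqmx_col (fun i => X i *m M)).1 -(eqmx_col X).1.
by rewrite -mxcol_mul mxrankMfree // row_free_unit.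
Qed.

Lemma ctrl_sim d n (A : 'M[C]_d) (B : 'M[C]_(d,n)) R : R \in unitmx ->
  controllable A B -> controllable (R *m A *m invmx R) (R *m B).
Proof.
move=> uR; rewrite /controllable.
have h : R *m A = (R *m A *m invmx R) *m R by rewrite -mulmxA mulVmx // mulmx1.
have e : forall i : 'I_d, <<((R *m A *m invmx R) ^+ i *m (R *m B))^T>>%MS =
                          <<(A ^+ i *m B)^T *m R^T>>%MS.
  by move=> i; rewrite mulmxA -(comm_pow _ h) -mulmxA trmx_mul.
rewrite (eq_bigr _ (fun i _ => e i)) rf_mul //.
by rewrite unitmx_tr.
Qed.

Lemma obs_sim d p (A : 'M[C]_d) (Cm : 'M[C]_(p,d)) R : R \in unitmx ->
  observable A Cm -> observable (R *m A *m invmx R) (Cm *m invmx R).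
Proof.
move=> uR; rewrite /observable.
have h : invmx R *m (R *m A *m invmx R) = A *m invmx R.
  by rewrite !mulmxA mulVmx // mul1mx.
have e : forall i : 'I_d, <<Cm *m invmx R *m (R *m A *m invmx R) ^+ i>>%MS =
                          <<Cm *m A ^+ i *m invmx R>>%MS.
  by move=> i; rewrite -mulmxA (comm_pow _ h) mulmxA.
rewrite (eq_bigr _ (fun i _ => e i)) rf_mul //.
by rewrite unitmx_inv.
Qed.

Lemma min_sim d n p (G : 'M[ratf C]_(p,n)) (A : 'M[C]_d) (B : 'M[C]_(d,n))
  (Cm : 'M[C]_(p,d)) R : R \in unitmx -> minimal_realization G A B Cm ->
  minimal_realization G (R *m A *m invmx R) (R *m B) (Cm *m invmx R).
Proof.
move=> uR [hr hc ho]; split.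
- by rewrite /is_realization transfer_sim.
- exact: ctrl_sim.
- exact: obs_sim.
Qed.


Lemma part2 n delta (G : 'M[ratf C]_n) (A1 A2 : 'M[C]_delta) (B1 B2 : 'M[C]_(delta, n))
          (C1 C2 : 'M[C]_(n, delta)) :
      A1 = A1^T -> C1 = B1^T -> minimal_realization G A1 B1 C1 ->
      A2 = A2^T -> C2 = B2^T -> minimal_realization G A2 B2 C2 ->
      exists! S : 'M[C]_delta,
        [/\ orthogonal_mx S, A2 = S *m A1 *m invmx S,
            B2 = S *m B1 & C2 = C1 *m invmx S].
Proof.
move=> sA1 eC1 [r1 c1 o1] sA2 eC2 [r2 c2 o2].
have mk := markov (etrans (esym r1) r2).
have [S [uS hA hB hC]] := sim_exists mk c1 o1 c2 o2.
have orth : S *m S^T = 1%:M.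
  have uS' : S^T \in unitmx by rewrite unitmx_tr.
  have t : A1 *m S^T = S^T *m A2 by rewrite {1}sA1 {1}sA2 -!trmx_mul hA.
  have hA' : invmx S^T *m A1 = A2 *m invmx S^T.
    rewrite -[invmx S^T *m A1]mulmx1 -(mulmxV uS') mulmxA -(mulmxA _ A1) t.
    by rewrite mulmxA mulVmx // mul1mx.
  have hB' : invmx S^T *m B1 = B2.
    have t2 : B1 = S^T *m B2 by rewrite -[B1]trmxK -eC1 hC eC2 trmx_mul trmxK.
    by rewrite t2 mulKmx.
  have eS := sim_unique c1 hA hB hA' hB'.
  by rewrite {1}eS mulVmx.
exists S; split.
  split => //.
  - by rewrite hA mulmxK.
  - by rewrite hC mulmxK.
move=> S' [oS' hA2 hB2 hC2].
have [uS' _] := mulmx1_unit oS'.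
apply: (sim_unique c1 hA hB).
- by rewrite hA2 mulmxKV.
- by rewrite hB2.
Qed.

End Final.

Unset Implicit Arguments.
Theorem mainTheorem1 (C : numClosedFieldType) (n delta : nat)
    (G : 'M[ratf C]_n) :
  strictly_proper G -> mcmillan_degree G delta -> G = G^T ->
  (exists (A : 'M[C]_delta) (B : 'M[C]_(delta, n)) (Cm : 'M[C]_(n, delta)),
      [/\ A = A^T, Cm = B^T & minimal_realization G A B Cm])
  /\
  (forall (A1 A2 : 'M[C]_delta) (B1 B2 : 'M[C]_(delta, n))
          (C1 C2 : 'M[C]_(n, delta)),
      A1 = A1^T -> C1 = B1^T -> minimal_realization G A1 B1 C1 ->
      A2 = A2^T -> C2 = B2^T -> minimal_realization G A2 B2 C2 ->
      exists! S : 'M[C]_delta,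
        [/\ orthogonal_mx S, A2 = S *m A1 *m invmx S,
            B2 = S *m B1 & C2 = C1 *m invmx S]).
Proof.
move=> _ [A [B [Cm [hr hc ho]]]] hG; split; last exact: part2.
have e : transfer A B Cm = transfer A^T Cm^T B^T by rewrite transfer_tr -hr.
have c2 : controllable A^T Cm^T by rewrite ctrl_tr.
have o2 : observable A^T B^T by rewrite obs_tr.
have [T [uT hA hB hC]] := sim_exists (markov e) hc ho c2 o2.
have hA' : T^T *m A = A^T *m T^T by rewrite -trmx_mul hA trmx_mul trmxK.
have hB' : T^T *m B = Cm^T by rewrite hC trmx_mul trmxK.
have sT := sim_unique hc hA' hB' hA hB.
have [R hR] := sym_fact sT.
have uR : R \in unitmx by move: uT; rewrite hR unitmx_mul => /andP[].
have uRT : R^T \in unitmx by rewrite unitmx_tr.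
exists (R *m A *m invmx R), (R *m B), (Cm *m invmx R); split.
- have key : A^T *m R^T = R^T *m (R *m A *m invmx R).
    by rewrite !mulmxA -hR hA hR !mulmxA mulmxK.
  have e1 : R *m A *m invmx R = invmx R^T *m (A^T *m R^T) by rewrite key mulKmx.
  by rewrite {1}e1 !trmx_mul trmx_inv.
- by rewrite hC hR trmx_mul !mulmxA mulmxK.
- exact: min_sim.
Qed.
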